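(* For $q\ge p\ge2$, $\mathrm{Z}_+(K_{p,q})=p$ and $\overline{\mathrm{Z}}_+(K_{p,q})=q$. If $p\ge3$, then $z^+_0(K_{p,q})=p+q-2$; in particular, for $p\ge4$, $z^+_0(K_{p,p})=2p-2>\overline{\mathrm{Z}}_+(K_{p,p})+1$. For $q\ge4$, $\underline{z^+_0}(K_{2,q})=3$ and $z^+_0(K_{2,q})=q+1$.
   Context: All graphs are finite, simple, undirected. PSD color change rule: with $B$ the set of blue vertices and $W=V(G)\setminus B$ the white vertices, let $W_1,\dots,W_k$ be the vertex sets of the connected components of $G[W]$; if $u\in B$, $w\in W_i$, and $w$ is the only white neighbor of $u$ in $G[W_i\cup B]$, then $u$ may color $w$ blue. $S$ is a PSD forcing set if starting with exactly $S$ blue and applying the rule repeatedly, all vertices become blue. $\mathrm{Z}_+(G)$ is the minimum cardinality of a PSD forcing set and $\overline{\mathrm{Z}}_+(G)$ the maximum cardinality of an inclusion-minimal PSD forcing set. $\mathfrak{Z}^+(G)$ has as vertices the PSD forcing sets, with $S_1S_2$ an edge iff $|S_1\ominus S_2|=1$; $\mathfrak{Z}^+_k(G)$ is its subgraph induced by PSD forcing sets of size at most $k$. $z^+_0(G)$ is the least $k_0$ with $\mathfrak{Z}^+_k(G)$ connected for all $k\ge k_0$; $\underline{z^+_0}(G)$ is the least $k$ with $\mathfrak{Z}^+_k(G)$ connected. $K_{p,q}$ is the complete bipartite graph with parts of sizes $p,q$. *)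

(* Defs.v *)
From Stdlib Require Import Relations.
From mathcomp Require Import all_boot.
Set Implicit Arguments. Unset Strict Implicit. Unset Printing Implicit Defensive.

Section PSD.
Variables (T : finType) (e : rel T).

Definition white_rel (B : {set T}) : rel T :=
  [rel x y | [&& e x y, x \notin B & y \notin B]].

Definition psd_force (B : {set T}) (u w : T) : bool :=
  [&& u \in B, w \notin B, e u w &
      [forall x, [&& x \notin B, e u x & connect (white_rel B) w x] ==> (x == w)]].

Inductive psd_reach (S : {set T}) : {set T} -> Prop :=
| psd_reach_base : psd_reach S S
| psd_reach_step B u w : psd_reach S B -> psd_force B u w -> psd_reach S (w |: B).

Definition psd_forcing_set (S : {set T}) : Prop := psd_reach S setT.

Definition is_Zplus (k : nat) : Prop :=
  (exists S, psd_forcing_set S /\ #|S| = k) /\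
  (forall S, psd_forcing_set S -> k <= #|S|).

Definition minimal_psd_forcing_set (S : {set T}) : Prop :=
  psd_forcing_set S /\ (forall S' : {set T}, S' \proper S -> ~ psd_forcing_set S').

Definition is_Zplus_bar (k : nat) : Prop :=
  (exists S, minimal_psd_forcing_set S /\ #|S| = k) /\
  (forall S, minimal_psd_forcing_set S -> #|S| <= k).

(* adjacency in the token addition/removal graph Z^+_k(G) *)
Definition tar_adj (k : nat) (S1 S2 : {set T}) : Prop :=
  [/\ psd_forcing_set S1, #|S1| <= k, psd_forcing_set S2, #|S2| <= k &
      #|(S1 :\: S2) :|: (S2 :\: S1)| = 1].

(* Z^+_k(G) is connected (a connected graph is nonempty) *)
Definition tar_connected (k : nat) : Prop :=
  (exists S, psd_forcing_set S /\ #|S| <= k) /\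
  (forall S1 S2, psd_forcing_set S1 -> #|S1| <= k ->
                 psd_forcing_set S2 -> #|S2| <= k ->
                 clos_refl_trans _ (tar_adj k) S1 S2).

Definition is_z0plus (k0 : nat) : Prop :=
  (forall k, k0 <= k -> tar_connected k) /\
  (forall k1, (forall k, k1 <= k -> tar_connected k) -> k0 <= k1).

Definition is_uz0plus (k0 : nat) : Prop :=
  tar_connected k0 /\ (forall k, tar_connected k -> k0 <= k).

End PSD.

Definition Kpq (p q : nat) : rel ('I_p + 'I_q)%type :=
  fun x y => match x, y with
             | inl _, inr _ | inr _, inl _ => true
             | _, _ => false
             end.
Arguments Kpq : clear implicits.

(* Main.v *)
Require Import Defs.
From Stdlib Require Import Relations.
From mathcomp Require Import all_boot.
From mathcomp Require Import zify.
Set Implicit Arguments. Unset Strict Implicit. Unset Printing Implicit Defensive.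

Section K.
Variables p q : nat.
Local Notation V := ('I_p + 'I_q)%type.
Local Notation G := (Kpq p q).

Definition cL (S : {set V}) := #|[set i : 'I_p | inl i \in S]|.
Definition cR (S : {set V}) := #|[set j : 'I_q | inr j \in S]|.
Definition Pc (a b : nat) : bool :=
  [|| a == p, b == q, (a == p.-1) && (0 < b) | (b == q.-1) && (0 < a)].

Lemma card_split (S : {set V}) : #|S| = cL S + cR S.
Proof.
rewrite /cL /cR -!sum1_card.
rewrite (big_sumType _ (fun x => x \in S)).
by congr (_ + _); apply: eq_bigl => i; rewrite inE.
Qed.

Lemma cL_le (S : {set V}) : cL S <= p.
Proof. by apply: leq_trans (max_card _) _; rewrite card_ord. Qed.
Lemma cR_le (S : {set V}) : cR S <= q.
Proof. by apply: leq_trans (max_card _) _; rewrite card_ord. Qed.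

Lemma cL_full (S : {set V}) : cL S = p -> forall i, inl i \in S.
Proof.
move=> h i.
have /eqP e : [set i | inl i \in S] == setT by move: h; rewrite /cL eqEcard subsetT cardsT card_ord => ->; rewrite leqnn.
by have := in_setT i; rewrite -e inE.
Qed.
Lemma cR_full (S : {set V}) : cR S = q -> forall i, inr i \in S.
Proof.
move=> h i.
have /eqP e : [set i | inr i \in S] == setT by move: h; rewrite /cR eqEcard subsetT cardsT card_ord => ->; rewrite leqnn.
by have := in_setT i; rewrite -e inE.
Qed.

Lemma cL_miss (S : {set V}) : cL S < p -> exists i, inl i \notin S.
Proof.
move=> h; apply/existsP; apply: contraLR h; rewrite negb_exists => /forallP H.
rewrite -leqNgt /cL.
have -> : [set i | inl i \in S] = setT by apply/setP=> i; rewrite !inE; have := H i; rewrite negbK.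
by rewrite cardsT card_ord.
Qed.
Lemma cR_miss (S : {set V}) : cR S < q -> exists i, inr i \notin S.
Proof.
move=> h; apply/existsP; apply: contraLR h; rewrite negb_exists => /forallP H.
rewrite -leqNgt /cR.
have -> : [set i | inr i \in S] = setT by apply/setP=> i; rewrite !inE; have := H i; rewrite negbK.
by rewrite cardsT card_ord.
Qed.

Lemma cL_mem (S : {set V}) : 0 < cL S -> exists i, inl i \in S.
Proof. by rewrite /cL card_gt0 => /set0Pn [i]; rewrite inE; exists i. Qed.
Lemma cR_mem (S : {set V}) : 0 < cR S -> exists i, inr i \in S.
Proof. by rewrite /cR card_gt0 => /set0Pn [i]; rewrite inE; exists i. Qed.

Lemma cL_uniq (S : {set V}) i0 i : cL S = p.-1 -> inl i0 \notin S -> inl i \notin S -> i = i0.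
Proof.
move=> h h0 h1.
have /eqP e : [set i | inl i \in S] == [set~ i0].
  move: h; rewrite /cL eqEcard cardsC1 card_ord => -> ; rewrite leqnn andbT.
  by apply/subsetP => k; rewrite !inE; apply: contraTneq => ->.
by move/setP/(_ i): e; rewrite !inE (negbTE h1) => /esym/negbFE/eqP.
Qed.
Lemma cR_uniq (S : {set V}) i0 i : cR S = q.-1 -> inr i0 \notin S -> inr i \notin S -> i = i0.
Proof.
move=> h h0 h1.
have /eqP e : [set i | inr i \in S] == [set~ i0].
  move: h; rewrite /cR eqEcard cardsC1 card_ord => -> ; rewrite leqnn andbT.
  by apply/subsetP => k; rewrite !inE; apply: contraTneq => ->.
by move/setP/(_ i): e; rewrite !inE (negbTE h1) => /esym/negbFE/eqP.
Qed.

Lemma cR_two (S : {set V}) j : 2 <= q -> cR S <= q - 2 -> exists j', j' != j /\ inr j' \notin S.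
Proof.
move=> hq h.
have hc := cardsC [set k | inr k \in S].
rewrite card_ord -/(cR S) in hc.
case: (pickP [pred k | (k != j) && (inr k \notin S)]) => [k /andP[h1 h2] | H]; first by exists k.
have sub : ~: [set k | inr k \in S] \subset [set j].
  apply/subsetP => k; rewrite !inE => hk; apply/negPn/negP => nk.
  by have := H k; rewrite /= nk hk.
have := subset_leq_card sub; rewrite cards1; lia.
Qed.
Lemma cL_two (S : {set V}) j : 2 <= p -> cL S <= p - 2 -> exists j', j' != j /\ inl j' \notin S.
Proof.
move=> hq h.
have hc := cardsC [set k | inl k \in S].
rewrite card_ord -/(cL S) in hc.
case: (pickP [pred k | (k != j) && (inl k \notin S)]) => [k /andP[h1 h2] | H]; first by exists k.
have sub : ~: [set k | inl k \in S] \subset [set j].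
  apply/subsetP => k; rewrite !inE => hk; apply/negPn/negP => nk.
  by have := H k; rewrite /= nk hk.
have := subset_leq_card sub; rewrite cards1; lia.
Qed.


Lemma conn_iso (B : {set V}) w x : (forall y, ~~ white_rel G B w y) ->
  connect (white_rel G B) w x -> x = w.
Proof.
move=> H /connectP [[|y s] /= P ->] //.
by move: P => /andP [hy _]; have := H y; rewrite hy.
Qed.

Lemma setC_add (B : {set V}) x : x \notin B -> #|~: (x |: B)| < #|~: B|.
Proof.
move=> xB; have h1 := cardsC (x |: B); have h2 := cardsC B.
rewrite cardsU1 xB in h1; lia.
Qed.

Lemma reach_allL S B : 0 < p -> psd_reach G S B -> (forall i, inl i \in B) -> psd_reach G S setT.
Proof.
move=> hp0 RB HB.
have [n] := ubnP #|~: B|; elim: n B RB HB => // n IH B RB HB hn.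
case: (pickP (fun x => x \notin B)) => [w wB | H]; last first.
  suff -> : setT = B by [].
  by apply/setP => x; have := H x; rewrite inE => /negbFE ->.
case: w wB => [i|j] wB; first by rewrite HB in wB.
apply: (IH (inr j |: B)).
- apply: (psd_reach_step (u := inl (Ordinal hp0)) RB).
  rewrite /psd_force HB wB /=.
  apply/forallP => x; apply/implyP => /and3P [xB _ cx]; rewrite (conn_iso _ cx) //.
  by case => [i'|j']; rewrite /white_rel /= ?HB ?andbF.
- by move=> i; rewrite inE HB orbT.
- exact: leq_trans (setC_add wB) (ltnSE hn).
Qed.

Lemma reach_allR S B : 0 < q -> psd_reach G S B -> (forall i, inr i \in B) -> psd_reach G S setT.
Proof.
move=> hp0 RB HB.
have [n] := ubnP #|~: B|; elim: n B RB HB => // n IH B RB HB hn.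
case: (pickP (fun x => x \notin B)) => [w wB | H]; last first.
  suff -> : setT = B by [].
  by apply/setP => x; have := H x; rewrite inE => /negbFE ->.
case: w wB => [i|j] wB; last by rewrite HB in wB.
apply: (IH (inl i |: B)).
- apply: (psd_reach_step (u := inr (Ordinal hp0)) RB).
  rewrite /psd_force HB wB /=.
  apply/forallP => x; apply/implyP => /and3P [xB _ cx]; rewrite (conn_iso _ cx) //.
  by case => [i'|j']; rewrite /white_rel /= ?HB ?andbF.
- by move=> k; rewrite inE HB orbT.
- exact: leq_trans (setC_add wB) (ltnSE hn).
Qed.

Lemma force_back S : 2 <= p -> 2 <= q -> Pc (cL S) (cR S) -> psd_forcing_set G S.
Proof.
move=> hp hq; rewrite /Pc /psd_forcing_set.
case/or4P => [/eqP hL | /eqP hR | /andP [/eqP hL hR] | /andP [/eqP hR hL]].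
- by apply: reach_allL; [lia | constructor | exact: cL_full].
- by apply: reach_allR; [lia | constructor | exact: cR_full].
- have [i0 h0] : exists i, inl i \notin S by apply: cL_miss; lia.
  have [j hj] := cR_mem hR.
  apply: (reach_allL (B := inl i0 |: S)); first lia.
    apply: (psd_reach_step (u := inr j)); first constructor.
    rewrite /psd_force hj h0 /=.
    apply/forallP => [[i|j']]; rewrite /= ?andbF //.
    by apply/implyP => /andP [ni _]; rewrite (cL_uniq hL h0 ni).
  move=> i; rewrite !inE; case: (eqVneq i i0) => [->|ne]; first by rewrite eqxx.
  apply/orP; right; apply/negPn/negP => ni; by rewrite (cL_uniq hL h0 ni) eqxx in ne.
- have [i0 h0] : exists i, inr i \notin S by apply: cR_miss; lia.
  have [j hj] := cL_mem hL.
  apply: (reach_allR (B := inr i0 |: S)); first lia.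
    apply: (psd_reach_step (u := inl j)); first constructor.
    rewrite /psd_force hj h0 /=.
    apply/forallP => [[j'|i]]; rewrite /= ?andbF //.
    by apply/implyP => /andP [ni _]; rewrite (cR_uniq hR h0 ni).
  move=> i; rewrite !inE; case: (eqVneq i i0) => [->|ne]; first by rewrite eqxx.
  apply/orP; right; apply/negPn/negP => ni; by rewrite (cR_uniq hR h0 ni) eqxx in ne.
Qed.


Lemma noforce B u w : 2 <= p -> 2 <= q -> ~~ Pc (cL B) (cR B) -> ~~ psd_force G B u w.
Proof.
move=> hp hq nP; apply/negP; rewrite /psd_force => /and4P [uB wB euw /forallP H].
have hL1 := cL_le B; have hR1 := cR_le B.
move: nP; rewrite /Pc => /norP [/eqP n1 /norP [/eqP n2 /norP [n3 n4]]].
case: u uB euw H => [i|j] uB; case: w wB => [i'|j'] wB //= _ H.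
- have hL : 0 < cL B by rewrite /cL card_gt0; apply/set0Pn; exists i; rewrite inE.
  have hR : cR B <= q - 2.
    case: (ltnP (cR B) (q - 1)) => h; first lia.
    have e : cR B = q.-1 by lia.
    by move: n4; rewrite e eqxx hL.
  have [k hk] : exists k, inl k \notin B by apply: cL_miss; lia.
  have [j'' [ne hj]] := cR_two j' hq hR.
  have := H (inr j''); rewrite /= hj /=.
  have -> : connect (white_rel G B) (inr j') (inr j'').
    apply: (connect_trans (y := inl k)); apply: connect1; by rewrite /white_rel /= hk ?hj ?wB.
  by move/eqP => [] /eqP; rewrite (negbTE ne).
- have hL : 0 < cR B by rewrite /cR card_gt0; apply/set0Pn; exists j; rewrite inE.
  have hR : cL B <= p - 2.
    case: (ltnP (cL B) (p - 1)) => h; first lia.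
    have e : cL B = p.-1 by lia.
    by move: n3; rewrite e eqxx hL.
  have [k hk] : exists k, inr k \notin B by apply: cR_miss; lia.
  have [j'' [ne hj]] := cL_two i' hp hR.
  have := H (inl j''); rewrite /= hj /=.
  have -> : connect (white_rel G B) (inl i') (inl j'').
    apply: (connect_trans (y := inr k)); apply: connect1; by rewrite /white_rel /= hk ?hj ?wB.
  by move/eqP => [] /eqP; rewrite (negbTE ne).
Qed.

Lemma reach_inv S B : 2 <= p -> 2 <= q -> psd_reach G S B -> Pc (cL S) (cR S) \/ B = S.
Proof.
move=> hp hq; elim => [|B' u w R IH F]; first by right.
case: IH => [h|e]; first by left.
case: (boolP (Pc (cL S) (cR S))) => [h | nP]; first by left.
by rewrite -e in nP; have := noforce u w hp hq nP; rewrite F.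
Qed.

Lemma cL_T : cL setT = p.
Proof. rewrite /cL (_ : [set i | _] = setT) ?cardsT ?card_ord //; by apply/setP => i; rewrite !inE. Qed.
Lemma cR_T : cR setT = q.
Proof. rewrite /cR (_ : [set i | _] = setT) ?cardsT ?card_ord //; by apply/setP => i; rewrite !inE. Qed.

Lemma char S : 2 <= p -> 2 <= q -> psd_forcing_set G S <-> Pc (cL S) (cR S).
Proof.
move=> hp hq; split; last exact: force_back.
move=> /(reach_inv hp hq) [//|<-].
by rewrite /Pc cL_T eqxx.
Qed.


Lemma cL_delL (S : {set V}) i : inl i \in S -> (cL (S :\ inl i)).+1 = cL S.
Proof.
move=> h; rewrite /cL (cardsD1 i [set k | inl k \in S]) inE h add1n; congr (_.+1).
by apply: eq_card => k; rewrite !inE (inj_eq inl_inj) andbC.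
Qed.
Lemma cR_delR (S : {set V}) i : inr i \in S -> (cR (S :\ inr i)).+1 = cR S.
Proof.
move=> h; rewrite /cR (cardsD1 i [set k | inr k \in S]) inE h add1n; congr (_.+1).
by apply: eq_card => k; rewrite !inE (inj_eq inr_inj) andbC.
Qed.
Lemma cR_delL (S : {set V}) i : cR (S :\ inl i) = cR S.
Proof. by apply: eq_card => k; rewrite !inE. Qed.
Lemma cL_delR (S : {set V}) i : cL (S :\ inr i) = cL S.
Proof. by apply: eq_card => k; rewrite !inE. Qed.
Lemma cL_addL (S : {set V}) i : inl i \notin S -> cL (inl i |: S) = (cL S).+1.
Proof.
move=> h; rewrite /cL.
have -> : [set k | inl k \in inl i |: S] = i |: [set k | inl k \in S].
  by apply/setP => k; rewrite !inE (inj_eq inl_inj).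
by rewrite cardsU1 inE (negbTE h).
Qed.
Lemma cR_addR (S : {set V}) i : inr i \notin S -> cR (inr i |: S) = (cR S).+1.
Proof.
move=> h; rewrite /cR.
have -> : [set k | inr k \in inr i |: S] = i |: [set k | inr k \in S].
  by apply/setP => k; rewrite !inE (inj_eq inr_inj).
by rewrite cardsU1 inE (negbTE h).
Qed.
Lemma cR_addL (S : {set V}) i : cR (inl i |: S) = cR S.
Proof. by apply: eq_card => k; rewrite !inE. Qed.
Lemma cL_addR (S : {set V}) i : cL (inr i |: S) = cL S.
Proof. by apply: eq_card => k; rewrite !inE. Qed.

Lemma sd1 (S1 S2 : {set V}) : #|(S1 :\: S2) :|: (S2 :\: S1)| = 1 ->
  exists x, (x \in S1 /\ S2 = S1 :\ x) \/ (x \notin S1 /\ S2 = x |: S1).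
Proof.
move/eqP/cards1P => [x e].
have hx : forall y, (y \in (S1 :\: S2) :|: (S2 :\: S1)) = (y == x) by move=> y; rewrite e inE.
exists x; have := hx x; rewrite eqxx !inE.
case: (boolP (x \in S1)) => x1; case: (boolP (x \in S2)) => x2 //= _.
- left; split => //; apply/setP => y; rewrite !inE; have := hx y; rewrite !inE.
  case: (eqVneq y x) => [->|_] /=; first by rewrite ?x2 ?(negbTE x2).
  by case: (y \in S1); case: (y \in S2).
- right; split => //; apply/setP => y; rewrite !inE; have := hx y; rewrite !inE.
  case: (eqVneq y x) => [->|_] /=; first by rewrite ?x2 ?(negbTE x2).
  by case: (y \in S1); case: (y \in S2).
Qed.

Lemma adj_counts (S1 S2 : {set V}) : #|(S1 :\: S2) :|: (S2 :\: S1)| = 1 ->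
  (cL S1 = cL S2 /\ (cR S1 = (cR S2).+1 \/ cR S2 = (cR S1).+1)) \/
  (cR S1 = cR S2 /\ (cL S1 = (cL S2).+1 \/ cL S2 = (cL S1).+1)).
Proof.
move/sd1 => [[i|j] [[h ->]|[h ->]]].
- by right; rewrite cR_delL -(cL_delL h); split; [|left].
- by right; rewrite cR_addL (cL_addL h); split; [|right].
- by left; rewrite cL_delR -(cR_delR h); split; [|left].
- by left; rewrite cL_addR (cR_addR h); split; [|right].
Qed.

Lemma PcP a b : Pc a b <-> (a = p \/ b = q \/ (a = p.-1 /\ 0 < b) \/ (b = q.-1 /\ 0 < a)).
Proof.
rewrite /Pc; split.
  case/or4P => [/eqP|/eqP|/andP[/eqP h1 h2]|/andP[/eqP h1 h2]]; tauto.
move=> [h|[h|[[h1 h2]|[h1 h2]]]].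
- by rewrite h eqxx.
- by rewrite h eqxx orbT.
- by rewrite h1 eqxx h2 !orbT.
- by rewrite h1 eqxx h2 !orbT.
Qed.

Lemma Fc (S : {set V}) : 2 <= p -> 2 <= q -> psd_forcing_set G S <->
  (cL S = p \/ cR S = q \/ (cL S = p.-1 /\ 0 < cR S) \/ (cR S = q.-1 /\ 0 < cL S)).
Proof. by move=> hp hq; rewrite char // PcP. Qed.

Definition XL : {set V} := [set x : V | if x is inl _ then true else false].
Definition YR : {set V} := [set x : V | if x is inr _ then true else false].

Lemma cL_XL : cL XL = p.
Proof. rewrite /cL (_ : [set i | _] = setT) ?cardsT ?card_ord //; by apply/setP => i; rewrite !inE. Qed.
Lemma cR_XL : cR XL = 0.
Proof. rewrite /cR (_ : [set i | _] = set0) ?cards0 //; by apply/setP => i; rewrite !inE. Qed.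
Lemma cR_YR : cR YR = q.
Proof. rewrite /cR (_ : [set i | _] = setT) ?cardsT ?card_ord //; by apply/setP => i; rewrite !inE. Qed.
Lemma cL_YR : cL YR = 0.
Proof. rewrite /cL (_ : [set i | _] = set0) ?cards0 //; by apply/setP => i; rewrite !inE. Qed.

Lemma eq_XL (S : {set V}) : cL S = p -> cR S = 0 -> S = XL.
Proof.
move=> hL hR; apply/setP => [[i|j]]; rewrite !inE; first exact: cL_full.
move: hR; rewrite /cR => /eqP; rewrite cards_eq0 => /eqP/setP/(_ j); by rewrite !inE => ->.
Qed.

Lemma adj_del k (S : {set V}) x : x \in S -> psd_forcing_set G S ->
  psd_forcing_set G (S :\ x) -> #|S| <= k -> tar_adj G k S (S :\ x).
Proof.
move=> xS F1 F2 hk; split => //.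
  by apply: leq_trans hk; apply: subset_leq_card; apply: subsetDl.
rewrite (_ : _ :|: _ = [set x]) ?cards1 //; apply/setP => y; rewrite !inE.
by case: (eqVneq y x) => [->|_]; rewrite ?xS //= ?andbT ?andbF ?negbK; case: (y \in S).
Qed.

Lemma adj_add k (S : {set V}) x : x \notin S -> psd_forcing_set G S ->
  psd_forcing_set G (x |: S) -> #|x |: S| <= k -> tar_adj G k S (x |: S).
Proof.
move=> xS F1 F2 hk; split => //.
  by apply: leq_trans hk; apply: subset_leq_card; apply: subsetUr.
rewrite (_ : (S :\: (x |: S)) :|: ((x |: S) :\: S) = [set x]) ?cards1 //; apply/setP => y; rewrite !inE.
by case: (eqVneq y x) => [->|_]; rewrite ?(negbTE xS) //= ?andbT ?andbF ?orbF; case: (y \in S).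
Qed.

Lemma adj_sym k (A B : {set V}) : tar_adj G k A B -> tar_adj G k B A.
Proof. by case=> a b c d e; split => //; rewrite setUC. Qed.

Lemma rt_sym k (A B : {set V}) : clos_refl_trans _ (tar_adj G k) A B -> clos_refl_trans _ (tar_adj G k) B A.
Proof.
elim => [x y h|x|x y z _ h1 _ h2]; first (by apply: rt_step; apply: adj_sym); first exact: rt_refl.
exact: rt_trans h2 h1.
Qed.

Local Notation RT k := (clos_refl_trans _ (tar_adj G k)).

Lemma rt_del k (S : {set V}) x : x \in S -> psd_forcing_set G S ->
  psd_forcing_set G (S :\ x) -> #|S| <= k -> RT k (S :\ x) XL -> RT k S XL.
Proof. move=> h1 h2 h3 h4 h5; apply: rt_trans h5; apply: rt_step; exact: adj_del. Qed.

Lemma rt_add k (S : {set V}) x : x \notin S -> psd_forcing_set G S ->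
  psd_forcing_set G (x |: S) -> #|x |: S| <= k -> RT k (x |: S) XL -> RT k S XL.
Proof. move=> h1 h2 h3 h4 h5; apply: rt_trans h5; apply: rt_step; exact: adj_add. Qed.

Lemma cR_delR' (S : {set V}) i : inr i \in S -> cR (S :\ inr i) = (cR S).-1.
Proof. by move=> h; rewrite -(cR_delR h). Qed.
Lemma cL_delL' (S : {set V}) i : inl i \in S -> cL (S :\ inl i) = (cL S).-1.
Proof. by move=> h; rewrite -(cL_delL h). Qed.

Ltac cnt h := repeat first [rewrite card_split | rewrite (cR_delR' h) | rewrite (cL_delL' h)
  | rewrite (cL_addL h) | rewrite (cR_addR h) | rewrite cL_delR | rewrite cR_delL
  | rewrite cL_addR | rewrite cR_addL]; try lia.

Section Hub.
Variable k : nat.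
Hypotheses (hp : 2 <= p) (hq : 2 <= q).

Lemma L1 n (S : {set V}) : cL S = p -> cR S = n -> #|S| <= k -> RT k S XL.
Proof.
elim: n S => [|n IH] S hL hR hk; first by rewrite (eq_XL hL hR); apply: rt_refl.
have [j hj] : exists j, inr j \in S by apply: cR_mem; lia.
move: hk; rewrite card_split => hk.
apply: (rt_del hj); [apply/Fc; cnt hj | apply/Fc; cnt hj | cnt hj | apply: IH; cnt hj].
Qed.

Hypothesis hk1 : p.+1 <= k.

Lemma L2 n (S : {set V}) : cL S = p.-1 -> cR S = n.+1 -> #|S| <= k -> RT k S XL.
Proof.
elim: n S => [|n IH] S hL hR hk.
  have [i hi] : exists i, inl i \notin S by apply: cL_miss; lia.
  move: hk; rewrite card_split => hk.
  apply: (rt_add hi); [apply/Fc; cnt hi | apply/Fc; cnt hi | cnt hi | apply: (L1 (n := 1)); cnt hi].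
have [j hj] : exists j, inr j \in S by apply: cR_mem; lia.
move: hk; rewrite card_split => hk.
apply: (rt_del hj); [apply/Fc; cnt hj | apply/Fc; cnt hj | cnt hj | apply: IH; cnt hj].
Qed.

Hypothesis hk2 : p + q - 2 <= k.

Lemma L3 m (S : {set V}) : cR S = q.-1 -> 0 < cL S -> cL S + m = p.-1 -> RT k S XL.
Proof.
elim: m S => [|m IH] S hR hL hm.
  apply: (L2 (n := q.-2)); cnt hR.
have [i hi] : exists i, inl i \notin S by apply: cL_miss; lia.
apply: (rt_add hi); [apply/Fc; cnt hi | apply/Fc; cnt hi | cnt hi | apply: IH; cnt hi].
Qed.

Lemma L4 (S : {set V}) : cR S = q -> 0 < cL S -> cL S < p -> #|S| <= k -> RT k S XL.
Proof.
move=> hR hL hLp hk; move: hk; rewrite card_split => hk.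
have [j hj] : exists j, inr j \in S by apply: cR_mem; lia.
apply: (rt_del hj); [apply/Fc; cnt hj | apply/Fc; cnt hj | cnt hj | ].
apply: (L3 (m := p.-1 - cL S)); cnt hj.
Qed.

Hypothesis hk3 : q.+1 <= k.

Lemma L5 (S : {set V}) : cR S = q -> cL S = 0 -> RT k S XL.
Proof.
move=> hR hL.
have [i hi] : exists i, inl i \notin S by apply: cL_miss; lia.
apply: (rt_add hi); [apply/Fc; cnt hi | apply/Fc; cnt hi | cnt hi | apply: L4; cnt hi].
Qed.
End Hub.

Lemma hub k (S : {set V}) : 2 <= p -> 2 <= q -> p.+1 <= k ->
  (k < q \/ (p + q - 2 <= k /\ q.+1 <= k)) ->
  psd_forcing_set G S -> #|S| <= k -> RT k S XL.
Proof.
move=> hp hq hk1 hk2 /(Fc S hp hq) F hk.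
have hL1 := cL_le S; have hR1 := cR_le S; have c := card_split S.
case: (eqVneq (cL S) p) => [e|ne]; first exact: (L1 hp hq e erefl hk).
case: (boolP ((cL S == p.-1) && (0 < cR S))) => [/andP [/eqP e1 e2]|nb].
  apply: (L2 hp hq hk1 e1 (_ : cR S = (cR S).-1.+1) hk); lia.
have {}nb : ~ (cL S = p.-1 /\ 0 < cR S) by move=> [e1 e2]; move: nb; rewrite e1 eqxx e2.
case: hk2 => [hk2|[hk2 hk3]]; first lia.
case: (eqVneq (cR S) q) => [e|ne2].
  case: (posnP (cL S)) => h0; first exact: (L5 hp hq hk1 hk2 hk3).
  apply: (L4 hp hq hk1 hk2) => //; lia.
apply: (L3 hp hq hk1 hk2 (_ : cR S = q.-1) (_ : 0 < cL S) (_ : cL S + (p.-1 - cL S) = p.-1)); lia.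
Qed.


Lemma tar_conn k : 2 <= p -> 2 <= q -> p.+1 <= k ->
  (k < q \/ (p + q - 2 <= k /\ q.+1 <= k)) -> tar_connected G k.
Proof.
move=> hp hq hk1 hk2; split.
  exists XL; split; first by apply/Fc; rewrite ?cL_XL; lia.
  by rewrite card_split cL_XL cR_XL; lia.
move=> S1 S2 F1 h1 F2 h2.
exact: rt_trans (hub hp hq hk1 hk2 F1 h1) (rt_sym (hub hp hq hk1 hk2 F2 h2)).
Qed.

Lemma not_conn_p3 : 3 <= p -> p <= q -> ~ tar_connected G (p + q - 3).
Proof.
move=> hp hpq [_ H].
have FX : psd_forcing_set G XL by apply/Fc; rewrite ?cL_XL; lia.
have FY : psd_forcing_set G YR by apply/Fc; rewrite ?cR_YR; lia.
have := H XL YR FX _ FY _.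
rewrite !card_split cL_XL cR_XL cL_YR cR_YR => /(_ ltac:(lia) ltac:(lia)).
suff inv : forall A B, RT (p + q - 3) A B -> p.-1 <= cL A -> p.-1 <= cL B.
  by move/inv; rewrite cL_XL cL_YR => /(_ ltac:(lia)); lia.
move=> A B; elim => [x y [Fx hx Fy hy hd]|x|x y z _ i1 _ i2]; last 2 first.
- by [].
- by move/i1/i2.
move/(Fc x ltac:(lia) ltac:(lia)): Fx => Fx; move/(Fc y ltac:(lia) ltac:(lia)): Fy => Fy.
have := adj_counts hd; move: hx hy; rewrite !card_split => hx hy.
have := cL_le x; have := cR_le x; have := cL_le y; have := cR_le y.
lia.
Qed.

Lemma iso_rt k (A B : {set V}) : (forall C, ~ tar_adj G k A C) -> RT k A B -> A = B.
Proof.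
move=> H /clos_rt_rt1n_iff R; case: R => // y z hy _.
by case: (H _ hy).
Qed.

Lemma minimal_lower k0 : 0 < k0 -> ~ tar_connected G k0.-1 -> forall k1,
  (forall k, k1 <= k -> tar_connected G k) -> k0 <= k1.
Proof.
move=> h0 nc k1 H; case: (leqP k0 k1) => // h; exfalso; apply: nc; apply: H; lia.
Qed.

Lemma Zplus_thm : 2 <= p -> p <= q -> is_Zplus G p.
Proof.
move=> hp hpq; split.
  exists XL; split; first by apply/Fc; rewrite ?cL_XL; lia.
  by rewrite card_split cL_XL cR_XL; lia.
move=> S /(Fc S hp ltac:(lia)); rewrite card_split.
have := cL_le S; have := cR_le S; lia.
Qed.

Lemma cL_sub (A B : {set V}) : A \subset B -> cL A <= cL B.
Proof.
move/subsetP => h; apply: subset_leq_card; apply/subsetP => i; rewrite !inE; exact: h.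
Qed.

Lemma Zbar_thm : 2 <= p -> p <= q -> is_Zplus_bar G q.
Proof.
move=> hp hpq; split.
  exists YR; split; last by rewrite card_split cL_YR cR_YR.
  split; first by apply/Fc; rewrite ?cR_YR; lia.
  move=> S' hS /(Fc S' hp ltac:(lia)).
  have := proper_card hS; have := cL_sub (proper_sub hS).
  rewrite !card_split cL_YR cR_YR.
  have := cR_le S'; lia.
move=> S [F M]; rewrite leqNgt; apply/negP => hS.
have := F; move/(Fc S hp ltac:(lia)) => Fs.
move: hS; rewrite card_split => hS.
have := cL_le S; have := cR_le S => hR1 hL1.
have : (0 < cR S /\ (cL S = p \/ (cR S).-1 = q \/ (cL S = p.-1 /\ 0 < (cR S).-1) \/ ((cR S).-1 = q.-1 /\ 0 < cL S)))
     \/ (0 < cL S /\ ((cL S).-1 = p \/ cR S = q \/ ((cL S).-1 = p.-1 /\ 0 < cR S) \/ (cR S = q.-1 /\ 0 < (cL S).-1))) by lia.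
case=> [[h1 h2]|[h1 h2]].
- have [j hj] := cR_mem h1.
  apply: (M (S :\ inr j)); first exact: properD1.
  by apply/Fc; rewrite ?(cR_delR' hj) ?cL_delR; lia.
- have [i hi] := cL_mem h1.
  apply: (M (S :\ inl i)); first exact: properD1.
  by apply/Fc; rewrite ?(cL_delL' hi) ?cR_delL; lia.
Qed.

Lemma z0_thm : 3 <= p -> p <= q -> is_z0plus G (p + q - 2).
Proof.
move=> hp hpq; split.
  move=> k hk; apply: tar_conn; lia.
apply: minimal_lower; first lia.
have -> : (p + q - 2).-1 = p + q - 3 by lia.
exact: not_conn_p3.
Qed.

Section P2.
Hypotheses (hp2 : p = 2) (hq4 : 4 <= q).

Lemma not_conn_q : ~ tar_connected G q.
Proof.
move=> [_ H].
have FX : psd_forcing_set G XL by apply/Fc; rewrite ?cL_XL; lia.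
have FY : psd_forcing_set G YR by apply/Fc; rewrite ?cR_YR; lia.
have := H YR XL FY _ FX _.
rewrite !card_split cL_XL cR_XL cL_YR cR_YR => /(_ ltac:(lia) ltac:(lia)).
move/iso_rt => /(_ _) e.
have : YR = XL.
  apply: e => C [_ _ FC hC hd].
  move/(Fc C ltac:(lia) ltac:(lia)): FC; have := adj_counts hd; rewrite cL_YR cR_YR.
  move: hC; rewrite card_split; have := cR_le C; have := cL_le C; lia.
by move/(congr1 cL); rewrite cL_XL cL_YR; lia.
Qed.

Lemma uz0_min k : tar_connected G k -> 3 <= k.
Proof.
move=> [[S [FS hS]] H].
move/(Fc S ltac:(lia) ltac:(lia)): FS; move: hS; rewrite card_split => hS FS.
case: (leqP 3 k) => // hk.
have p0 : 0 < p by lia.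
have q0 : 0 < q by lia.
pose i0 : 'I_p := Ordinal p0; pose j0 : 'I_q := Ordinal q0.
have hi : inl i0 \in XL by rewrite inE.
have hj : inr j0 \notin XL :\ inl i0 by rewrite !inE.
have FX : psd_forcing_set G XL by apply/Fc; rewrite ?cL_XL; lia.
have FS' : psd_forcing_set G (inr j0 |: (XL :\ inl i0)).
  apply/Fc; rewrite ?(cR_addR hj) ?cL_addR ?(cL_delL' hi) ?cR_delL ?cL_XL ?cR_XL; lia.
have := H XL _ FX _ FS' _.
rewrite !card_split ?(cR_addR hj) ?cL_addR ?(cL_delL' hi) ?cR_delL ?cL_XL ?cR_XL.
move=> /(_ ltac:(lia) ltac:(lia)).
move/iso_rt => /(_ _) e.
have : XL = inr j0 |: (XL :\ inl i0).
  apply: e => C [_ _ FC hC hd].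
  move/(Fc C ltac:(lia) ltac:(lia)): FC; have := adj_counts hd; rewrite cL_XL cR_XL.
  move: hC; rewrite card_split; have := cR_le C; have := cL_le C; lia.
by move/(congr1 cR); rewrite (cR_addR hj) cR_delL cR_XL.
Qed.

Lemma uz0_thm : is_uz0plus G 3.
Proof. split; last exact: uz0_min. apply: tar_conn; lia. Qed.

Lemma z0_p2 : is_z0plus G (q + 1).
Proof.
split.
  move=> k hk; apply: tar_conn; lia.
apply: minimal_lower; first lia.
by rewrite addn1 /=; apply: not_conn_q.
Qed.
End P2.
End K.

Theorem proposition4p8 (p q : nat) (hp : 2 <= p) (hpq : p <= q) :
  is_Zplus (Kpq p q) p /\ is_Zplus_bar (Kpq p q) q /\
  (3 <= p -> is_z0plus (Kpq p q) (p + q - 2)) /\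
  (4 <= p -> is_z0plus (Kpq p p) (2 * p - 2) /\
             forall zb, is_Zplus_bar (Kpq p p) zb -> zb + 1 < 2 * p - 2) /\
  (p = 2 -> 4 <= q -> is_uz0plus (Kpq 2 q) 3 /\ is_z0plus (Kpq 2 q) (q + 1)).
Proof.
split; first exact: Zplus_thm.
split; first exact: Zbar_thm.
split; first by move=> h3; apply: z0_thm.
split.
  move=> h4; split.
    have -> : 2 * p - 2 = p + p - 2 by lia.
    by apply: z0_thm; lia.
  move=> zb [[S [[FS MS] hS]] Hb].
  have [[Y [MY hY]] HY] := Zbar_thm (p := p) (q := p) hp (leqnn p).
  have h1 := Hb Y MY; have h2 := HY S (conj FS MS); lia.
move=> e hq; subst p; split; [exact: uz0_thm | exact: z0_p2].
Qed.
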